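(* Let $S$ be a set with $0\in S$. For every space $X\in\{V_S,\overline{V_S},\widehat{V_S},\overline{\overline{V_S}}\}$ the canonical projection $\pi_X\colon\mathrm{Aut}(X)\to\mathrm{Aut}(\mathbb Q_{\ge0})$, $f\mapsto D_f$, admits a group homomorphism $s_X\colon\mathrm{Aut}(\mathbb Q_{\ge0})\to\mathrm{Aut}(X)$ with $\pi_X\circ s_X=\mathrm{id}$. Moreover, $s_X\colon\mathrm{Aut}(\mathbb Q_{\ge0})\to\mathrm{Aut}(X)$ is continuous for $X=V_S$, and $s_X\colon\mathrm{Aut}(\mathbb Q_{\ge0})\to\mathrm{Aut}_M(X)$ is continuous for $X=\overline{V_S}$.
   Context: For $f\colon\mathbb Q_{>0}\to S$ let $\mathrm{supp}(f)=\{x:f(x)\ne0\}$. $V_S$: all $f$ with finite support; $\overline{V_S}$: all $f$ whose support is finite or a decreasing sequence converging to $0$; $\widehat{V_S}$: support finite or a decreasing sequence; $\overline{\overline{V_S}}$: support is conversely well-ordered (a decreasing countable ordinal). Each is a two-sorted ultrametric space with distance set $\mathbb Q_{\ge0}$ and $d(f,g)=\max\{r\in\mathbb Q_{>0}:f(r)\ne g(r)\}$ for $f\ne g$. A dc-automorphism of $X$ is a bijection $f$ of $X$ with an order automorphism $D_f$ of $\mathbb Q_{\ge0}$ such that $d(f(x),f(y))=D_f(d(x,y))$. $\mathrm{Aut}(X)$: group of dc-automorphisms with topology of pointwise convergence on both sorts (basic neighbourhoods: agree with $f$ on finitely many points and finitely many distances). $\mathrm{Aut}_M(X)$: same group with basic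 neighbourhoods $\{g:d(g(x),f(x))<r\ \forall x\in A\}$, $A$ finite, $r\in\mathbb Q_{>0}$. $\mathrm{Aut}(\mathbb Q_{\ge0})$: order automorphisms with pointwise convergence topology. *)

(* Defs.v *)
From HB Require Import structures.
From mathcomp Require Import all_boot all_order all_algebra.
From mathcomp Require Import boolp classical_sets cardinality.
Set Implicit Arguments. Unset Strict Implicit. Unset Printing Implicit Defensive.
Import Order.TTheory GRing.Theory Num.Theory.
Local Open Scope ring_scope.
Local Open Scope classical_set_scope.

Definition qpos := {q : rat | 0 < q}.
Definition qnn := {q : rat | 0 <= q}.

Section Spaces.
Variables (S : Type) (s0 : S).   (* s0 plays the role of 0 in S *)

Definition supp (f : qpos -> S) : set qpos := [set q | f q <> s0].

Definition strict_decr (a : nat -> qpos) : Prop :=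
  forall n, sval (a n.+1) < sval (a n).

Definition PV (f : qpos -> S) : Prop := finite_set (supp f).

Definition PVbar (f : qpos -> S) : Prop :=
  finite_set (supp f) \/
  exists a : nat -> qpos, strict_decr a /\ supp f = range a /\
    (forall e : rat, 0 < e -> exists N, forall n, (N <= n)%N -> `|sval (a n)| < e).

Definition PVhat (f : qpos -> S) : Prop :=
  finite_set (supp f) \/
  exists a : nat -> qpos, strict_decr a /\ supp f = range a.

Definition PVbb (f : qpos -> S) : Prop :=
  forall A : set qpos, A `<=` supp f -> A !=set0 ->
    exists2 m, A m & forall q, A q -> sval q <= sval m.

Definition space (P : (qpos -> S) -> Prop) := {f : qpos -> S | P f}.

(* d(f,g) = r : r = 0 if f = g, otherwise r = max {x > 0 : f x <> g x} *)
Definition isdist (f g : qpos -> S) (r : qnn) : Prop :=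
  (f = g /\ sval r = 0) \/
  ((exists2 q : qpos, sval q = sval r & f q <> g q) /\
   (forall q : qpos, sval r < sval q -> f q = g q)).

End Spaces.

Record qaut := QAut {
  qa_fun :> qnn -> qnn;
  qa_bij : bijective qa_fun;
  qa_mono : forall x y : qnn, (sval x <= sval y) = (sval (qa_fun x) <= sval (qa_fun y))
}.

(* dc-automorphisms of the space X = space P : pairs (F, D_F) *)
Record dcaut (S : Type) (s0 : S) (P : (qpos -> S) -> Prop) := DCAut {
  dc_fun : space P -> space P;
  dc_D : qaut;
  dc_bij : bijective dc_fun;
  dc_dist : forall (x y : space P) (r : qnn),
      isdist (sval x) (sval y) r ->
      isdist (sval (dc_fun x)) (sval (dc_fun y)) (dc_D r)
}.

Definition section_hom (S : Type) (s0 : S) (P : (qpos -> S) -> Prop)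
    (s : qaut -> dcaut s0 P) : Prop :=
  (forall sigma tau rho : qaut, (forall r, rho r = sigma (tau r)) ->
     (forall x, dc_fun (s rho) x = dc_fun (s sigma) (dc_fun (s tau) x)) /\
     (forall r, dc_D (s rho) r = dc_D (s sigma) (dc_D (s tau) r))) /\
  (forall (sigma : qaut) r, dc_D (s sigma) r = sigma r).

(* continuity Aut(Q>=0) -> Aut(X), both with the pointwise-convergence
   topology (on both sorts for Aut(X)), via basic neighbourhoods *)
Definition cont_pointwise (S : Type) (s0 : S) (P : (qpos -> S) -> Prop)
    (s : qaut -> dcaut s0 P) : Prop :=
  forall (sigma : qaut) (A : set (space P)) (B : set qnn),
    finite_set A -> finite_set B ->
    exists C : set qnn, finite_set C /\
      forall tau : qaut, (forall r, C r -> tau r = sigma r) ->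
        (forall x, A x -> dc_fun (s tau) x = dc_fun (s sigma) x) /\
        (forall r, B r -> dc_D (s tau) r = dc_D (s sigma) r).

(* continuity Aut(Q>=0) -> Aut_M(X), via basic neighbourhoods
   {g : d(g x, f x) < e for all x in A} *)
Definition cont_metric (S : Type) (s0 : S) (P : (qpos -> S) -> Prop)
    (s : qaut -> dcaut s0 P) : Prop :=
  forall (sigma : qaut) (A : set (space P)) (e : rat),
    finite_set A -> 0 < e ->
    exists C : set qnn, finite_set C /\
      forall tau : qaut, (forall r, C r -> tau r = sigma r) ->
        forall x, A x -> exists2 d : qnn,
          isdist (sval (dc_fun (s tau) x)) (sval (dc_fun (s sigma) x)) d &
          sval d < e.

(* Main.v *)
Require Import Defs.
From mathcomp Require Import all_boot all_order all_algebra.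
From mathcomp Require Import boolp classical_sets cardinality.
Set Implicit Arguments. Unset Strict Implicit. Unset Printing Implicit Defensive.
Import Order.TTheory GRing.Theory Num.Theory.
Local Open Scope ring_scope.
Local Open Scope classical_set_scope.

Lemma qnn_inj (x y : qnn) : sval x = sval y -> x = y.
Proof. by case: x => x hx; case: y => y hy /= e; apply: eq_exist. Qed.
Lemma qpos_inj (x y : qpos) : sval x = sval y -> x = y.
Proof. by case: x => x hx; case: y => y hy /= e; apply: eq_exist. Qed.
Lemma space_inj S (P : (qpos -> S) -> Prop) (x y : Defs.space P) : sval x = sval y -> x = y.
Proof. by case: x => x hx; case: y => y hy /= e; apply: eq_exist. Qed.

Lemma ex_inv (s : qaut) : exists g : qnn -> qnn, cancel s g /\ cancel g s.
Proof. by case: (qa_bij s) => g h1 h2; exists g. Qed.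
Definition ainv (s : qaut) : qnn -> qnn := proj1_sig (cid (ex_inv s)).
Lemma ainvP (s : qaut) : cancel s (ainv s) /\ cancel (ainv s) s.
Proof. exact: (proj2_sig (cid (ex_inv s))). Qed.
Lemma ainvK (s : qaut) x : ainv s (s x) = x. Proof. by case: (ainvP s) => h _; apply: h. Qed.
Lemma ainvK' (s : qaut) x : s (ainv s x) = x. Proof. by case: (ainvP s) => _ h; apply: h. Qed.

Lemma qa_lt (s : qaut) (x y : qnn) : (sval x < sval y) = (sval (s x) < sval (s y)).
Proof. by rewrite !ltNge (qa_mono s y x). Qed.

Lemma qa_ler (s : qaut) (x y : qnn) : (sval (ainv s x) <= sval (ainv s y)) = (sval x <= sval y).
Proof. by rewrite (qa_mono s) !ainvK'. Qed.

Definition qzero : qnn := exist _ 0 (lexx 0).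

Lemma qa0 (s : qaut) : s qzero = qzero.
Proof.
have h1 : sval qzero <= sval (ainv s qzero) := svalP (ainv s qzero).
rewrite (qa_mono s) ainvK' in h1.
apply: qnn_inj; apply/eqP; rewrite eq_le h1 /=; exact: (svalP (s qzero)).
Qed.

Lemma qa_pos (s : qaut) (x : qnn) : 0 < sval x -> 0 < sval (s x).
Proof. by move=> hx; have := hx; rewrite -[0]/(sval qzero) (qa_lt s) qa0. Qed.

Definition qinv (s : qaut) : qaut.
Proof.
refine (@QAut (ainv s) _ _).
  by exists s => x; [apply: ainvK' | apply: ainvK].
by move=> x y; rewrite qa_ler.
Defined.

Definition toNN (p : qpos) : qnn := exist _ (sval p) (ltW (svalP p)).

Definition pos (s : qaut) (p : qpos) : qpos :=
  exist _ (sval (s (toNN p))) (@qa_pos s (toNN p) (svalP p)).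

Lemma qinv_fun s x : qinv s x = ainv s x. Proof. by []. Qed.

Definition posinv (s : qaut) := pos (qinv s).

Lemma posK s p : posinv s (pos s p) = p.
Proof. apply: qpos_inj => /=. have -> : toNN (pos s p) = s (toNN p) by apply: qnn_inj.
by rewrite ainvK. Qed.
Lemma posK' s p : pos s (posinv s p) = p.
Proof. apply: qpos_inj => /=. have -> : toNN (posinv s p) = ainv s (toNN p) by apply: qnn_inj.
by rewrite ainvK'. Qed.

Lemma pos_le s p q : (sval (pos s p) <= sval (pos s q)) = (sval p <= sval q).
Proof. by rewrite /= -qa_mono. Qed.
Lemma pos_lt s p q : (sval (pos s p) < sval (pos s q)) = (sval p < sval q).
Proof. by rewrite /= -qa_lt. Qed.

Definition qid : qaut.
Proof. refine (@QAut id _ _) => //. by exists id. Defined.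

Section Act.
Variables (S : Type) (s0 : S).

Definition act (s : qaut) (f : qpos -> S) : qpos -> S := fun q => f (posinv s q).

Lemma act_pos s f p : act s f (pos s p) = f p.
Proof. by rewrite /act posK. Qed.

Lemma toNN_pos s p : toNN (pos s p) = s (toNN p).
Proof. exact: qnn_inj. Qed.

Lemma pos_comp (rho sig tau : qaut) : (forall r, rho r = sig (tau r)) ->
  forall p, pos rho p = pos sig (pos tau p).
Proof. by move=> h p; apply: qpos_inj => /=; rewrite toNN_pos h. Qed.

Lemma pos_inj s : injective (pos s).
Proof. by move=> x y h; rewrite -(posK s x) h posK. Qed.

Lemma act_comp (rho sig tau : qaut) f : (forall r, rho r = sig (tau r)) ->
  act rho f = act sig (act tau f).
Proof.
move=> h; apply: funext => q; rewrite /act; congr f.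
apply: (@pos_inj rho); rewrite posK' (pos_comp h) !posK'; done.
Qed.

Lemma act_id (rho : qaut) f : (forall r, rho r = r) -> act rho f = f.
Proof.
move=> h; apply: funext => q; rewrite /act; congr f.
have e : pos rho q = q by apply: qpos_inj => /=; rewrite h.
by rewrite -{1}e posK.
Qed.

Lemma act_agree (tau sig : qaut) f :
  (forall p, supp s0 f p -> pos tau p = pos sig p) -> act tau f = act sig f.
Proof.
move=> h; apply: funext => q; rewrite /act.
case: (pselect (supp s0 f (posinv sig q))) => hs.
  by rewrite -{1}(posK' sig q) -h // posK.
case: (pselect (supp s0 f (posinv tau q))) => ht.
  by rewrite -{2}(posK' tau q) h // posK.
rewrite /supp /= in hs ht.
have e1 : f (posinv sig q) = s0 by case: (pselect (f (posinv sig q) = s0)) => // /hs.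
have e2 : f (posinv tau q) = s0 by case: (pselect (f (posinv tau q) = s0)) => // /ht.
by rewrite e1 e2.
Qed.

Lemma act_dist (s : qaut) f g r : isdist f g r -> isdist (act s f) (act s g) (s r).
Proof.
case=> [[-> h0]|[[q hq hfg] hgt]].
  left; split => //.
  have -> : r = qzero by apply: qnn_inj.
  by rewrite qa0.
have eq : toNN q = r by apply: qnn_inj.
right; split.
  exists (pos s q); last by rewrite !act_pos.
  by rewrite -eq.
move=> q' hq'; rewrite /act; apply: hgt.
rewrite -(posK' s q') -eq /= -qa_lt in hq'.
by rewrite -eq.
Qed.

Definition Pinv (P : (qpos -> S) -> Prop) := forall s f, P f -> P (act s f).

Variables (P : (qpos -> S) -> Prop) (HP : Pinv P).

Definition amap (s : qaut) (x : Defs.space P) : Defs.space P :=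
  exist _ (act s (sval x)) (HP s (svalP x)).

Lemma amap_bij s : bijective (amap s).
Proof.
exists (amap (qinv s)) => x; apply: space_inj => /=; rewrite -(@act_comp qid) ?act_id //.
- by move=> r; rewrite /= ainvK.
- by move=> r; rewrite /= ainvK'.
Qed.

Definition mk (s : qaut) : dcaut s0 P.
Proof.
refine (@DCAut S s0 P (amap s) s (amap_bij s) _).
move=> x y r; exact: act_dist.
Defined.

Lemma mk_section : section_hom mk.
Proof.
split=> //= sig tau rho h; split=> //= x.
by apply: space_inj => /=; apply: act_comp.
Qed.

End Act.

Definition cwo (X : set qpos) := forall A : set qpos, A `<=` X -> A !=set0 ->
    exists2 m, A m & forall q, A q -> sval q <= sval m.

Lemma cwo_sub X Y : X `<=` Y -> cwo Y -> cwo X.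
Proof. by move=> h hY A hA; apply: hY; apply: subset_trans h. Qed.

Lemma seq_max (s : seq qpos) : s != [::] ->
  exists2 m, m \in s & forall q, q \in s -> sval q <= sval m.
Proof.
elim: s => [//|x t IH] _.
case: (eqVneq t [::]) => [->|/IH [m hm hmax]].
  by exists x; rewrite ?mem_seq1 // => q; rewrite mem_seq1 => /eqP ->.
case: (leP (sval x) (sval m)) => hxm.
  exists m; first by rewrite inE hm orbT.
  by move=> q; rewrite inE => /orP[/eqP ->|/hmax].
exists x; first by rewrite inE eqxx.
move=> q; rewrite inE => /orP[/eqP ->//|/hmax h]; exact: le_trans h (ltW hxm).
Qed.

Lemma cwo_finite X : finite_set X -> cwo X.
Proof.
move=> hX A hA [q Aq].
have /finite_seqP [s es] : finite_set A by apply: sub_finite_set hA hX.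
have hs : s != [::] by apply/eqP => s0; move: Aq; rewrite es s0 /= in_nil.
have [m hm hmax] := seq_max hs.
exists m; first by rewrite es.
by move=> q'; rewrite es; apply: hmax.
Qed.

Lemma decr_le (a : nat -> qpos) : strict_decr a -> forall n m, (m <= n)%N -> sval (a n) <= sval (a m).
Proof.
move=> ha; elim=> [|n IH] m hmn.
  by move: hmn; rewrite leqn0 => /eqP ->.
move: hmn; rewrite leq_eqVlt => /orP[/eqP ->//|hmn].
exact: le_trans (ltW (ha n)) (IH m hmn).
Qed.

Lemma cwo_decr (a : nat -> qpos) : strict_decr a -> cwo (range a).
Proof.
move=> ha A hA [q Aq].
have [k _ ek] := hA q Aq.
have ex : exists n, `[< A (a n) >] by exists k; apply/asboolP; rewrite ek.
case: (ex_minnP ex) => n /asboolP An hmin.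
exists (a n) => // q' Aq'.
have [k' _ ek'] := hA q' Aq'.
rewrite -ek'; apply: decr_le => //; apply: hmin; apply/asboolP; by rewrite ek'.
Qed.

Lemma cwo_union X Y : cwo X -> cwo Y -> cwo (X `|` Y).
Proof.
move=> hX hY A hA hne.
case: (pselect ((A `&` X) !=set0)) => h1; last first.
  apply: hY => // q Aq; case: (hA q Aq) => // Xq.
  by exfalso; apply: h1; exists q.
case: (pselect ((A `&` Y) !=set0)) => h2; last first.
  apply: hX => // q Aq; case: (hA q Aq) => // Yq.
  by exfalso; apply: h2; exists q.
have [m1 [Am1 _] hm1] := hX _ (@subIsetr _ A X) h1.
have [m2 [Am2 _] hm2] := hY _ (@subIsetr _ A Y) h2.
case: (leP (sval m1) (sval m2)) => h12.
  exists m2 => // q Aq; case: (hA q Aq) => [Xq|Yq]; last exact: hm2.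
  exact: le_trans (hm1 q (conj Aq Xq)) h12.
exists m1 => // q Aq; case: (hA q Aq) => [Xq|Yq]; first exact: hm1.
exact: le_trans (hm2 q (conj Aq Yq)) (ltW h12).
Qed.

Lemma cwo_image (s : qaut) X : cwo X -> cwo (pos s @` X).
Proof.
move=> hX A hA [q Aq].
have h1 : (pos s @^-1` A) `<=` X.
  move=> p Ap; have [p' Xp' e] := hA _ Ap.
  by rewrite -(pos_inj e).
have [m Am hm] := hX _ h1 (ex_intro _ (posinv s q) (eq_ind_r A Aq (posK' s q))).
exists (pos s m) => // q' Aq'.
rewrite -(posK' s q') pos_le; apply: hm; by rewrite /= posK'.
Qed.

Section Pres.
Variables (S : Type) (s0 : S).

Lemma supp_act s f : supp s0 (act s f) = pos s @` supp s0 f.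
Proof.
apply/seteqP; split => q /=.
  by move=> h; exists (posinv s q) => //; rewrite posK'.
by case=> p hp <-; rewrite /supp /= act_pos.
Qed.

Lemma PV_inv : Pinv (PV s0).
Proof. by move=> s f; rewrite /PV supp_act; apply: finite_image. Qed.

Lemma decr_inv s (a : nat -> qpos) : strict_decr a -> strict_decr (pos s \o a).
Proof. by move=> ha n; rewrite /= -qa_lt; apply: ha. Qed.

Lemma range_inv s (a : nat -> qpos) : pos s @` range a = range (pos s \o a).
Proof.
apply/seteqP; split => q /=.
  by case=> _ [n _ <-] <-; exists n.
by case=> n _ <-; exists (a n) => //; exists n.
Qed.

Lemma PVhat_inv : Pinv (PVhat s0).
Proof.
move=> s f [hf|[a [ha ea]]]; rewrite /PVhat supp_act.
  by left; apply: finite_image.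
by right; exists (pos s \o a); split; [apply: decr_inv | rewrite ea range_inv].
Qed.

Lemma PVbar_inv : Pinv (PVbar s0).
Proof.
move=> s f [hf|[a [ha [ea hc]]]]; rewrite /PVbar supp_act.
  by left; apply: finite_image.
right; exists (pos s \o a); split; first exact: decr_inv.
split; first by rewrite ea range_inv.
move=> e he.
pose eN : qnn := exist _ e (ltW he).
have dpos : 0 < sval (ainv s eN) := @qa_pos (qinv s) eN he.
have [N hN] := hc _ dpos.
exists N => n hn.
have h1 := hN n hn; rewrite gtr0_norm in h1; last exact: (svalP (a n)).
rewrite gtr0_norm; last exact: (svalP (pos s (a n))).
have : sval (toNN (a n)) < sval (ainv s eN) by [].
by rewrite (qa_lt s) ainvK'.
Qed.

Lemma PVbb_inv : Pinv (PVbb s0).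
Proof.
move=> s f hf; rewrite /PVbb supp_act; exact: (@cwo_image s (supp s0 f) hf).
Qed.

Lemma PVbar_cwo f : PVbar s0 f -> cwo (supp s0 f).
Proof.
case=> [hf|[a [ha [ea _]]]]; first exact: cwo_finite.
rewrite ea; exact: cwo_decr.
Qed.

Lemma PVbar_fin_above f c : PVbar s0 f -> 0 < c ->
  finite_set (supp s0 f `&` [set p | c <= sval p]).
Proof.
case=> [hf|[a [ha [ea hc]]]] c0; first exact: finite_setIl.
have [N hN] := hc _ c0.
apply: (@sub_finite_set _ _ (a @` `I_N)); last exact: finite_image (finite_II N).
move=> p []; rewrite ea => -[n _ <-] /= hcn.
exists n => //=; rewrite ltnNge; apply/negP => /hN.
by rewrite gtr0_norm ?(svalP (a n)) // ltNge hcn.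
Qed.

End Pres.

Section Cont.
Variables (S : Type) (s0 : S).

Lemma cont_PV : cont_pointwise (mk s0 (@PV_inv _ s0)).
Proof.
move=> sig A B hA hB.
exists (B `|` \bigcup_(x in A) (toNN @` supp s0 (sval x))); split.
  rewrite finite_setU; split => //; apply: bigcup_finite => // x Ax.
  apply: finite_image; exact: (svalP x).
move=> tau h; split => [x Ax|r Br]; last by apply: h; left.
apply: space_inj => /=; apply: (@act_agree _ s0) => p hp.
by apply: qpos_inj => /=; rewrite h //; right; exists x => //; exists p.
Qed.

Lemma cont_PVbar : cont_metric (mk s0 (@PVbar_inv _ s0)).
Proof.
move=> sig A e hA he.
pose eN : qnn := exist _ e (ltW he).
pose p0 := ainv sig eN.
have p0pos : 0 < sval p0 := @qa_pos (qinv sig) eN he.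
exists ([set p0] `|` \bigcup_(x in A)
   (toNN @` (supp s0 (sval x) `&` [set p | sval p0 <= sval p]))); split.
  rewrite finite_setU; split; first exact: finite_set1.
  apply: bigcup_finite => // x Ax; apply: finite_image.
  exact: PVbar_fin_above (svalP x) p0pos.
move=> tau h x Ax.
rewrite /=.
set f := sval x.
have tp0 : tau p0 = eN by rewrite h ?ainvK' //; left.
have agree : forall p, supp s0 f p -> sval p0 <= sval p -> pos tau p = pos sig p.
  move=> p hp hle; apply: qpos_inj => /=; rewrite h //; right; exists x => //.
  by exists p.
have key : forall q : qpos, e <= sval q -> act tau f q = act sig f q.
  move=> q hq; rewrite /act.
  case: (pselect (supp s0 f (posinv sig q))) => hs.
    have hle : sval p0 <= sval (posinv sig q).
      rewrite (qa_mono sig) ainvK'.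
      by rewrite qinv_fun ainvK'.
    by rewrite -{1}(posK' sig q) -agree // posK.
  case: (pselect (supp s0 f (posinv tau q))) => ht.
    have hle : sval p0 <= sval (posinv tau q).
      rewrite (qa_mono tau) tp0.
      by rewrite qinv_fun ainvK'.
    exfalso; apply: hs.
    by rewrite -{1}(posK' tau q) agree // posK.
  have e1 : f (posinv sig q) = s0 by case: (pselect (f (posinv sig q) = s0)) => // /hs.
  have e2 : f (posinv tau q) = s0 by case: (pselect (f (posinv tau q) = s0)) => // /ht.
  by rewrite e1 e2.
case: (pselect (act tau f = act sig f)) => heq.
  by exists qzero => //; left.
pose D := [set q | act tau f q <> act sig f q].
have Dne : D !=set0.
  apply: contrapT => hne; apply: heq; apply: funext => q.
  case: (pselect (act tau f q = act sig f q)) => // hq.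
  by exfalso; apply: hne; exists q.
have Dsub : D `<=` supp s0 (act tau f) `|` supp s0 (act sig f).
  move=> q hq; case: (pselect (act tau f q = s0)) => h1; last by left.
  by right; rewrite /supp /= -h1 => /esym.
have hcwo : cwo (supp s0 (act tau f) `|` supp s0 (act sig f)).
  by apply: cwo_union; apply: PVbar_cwo; apply: PVbar_inv; exact: (svalP x).
have [m Dm hm] := hcwo D Dsub Dne.
exists (toNN m).
  right; split; first by exists m.
  move=> q hq; case: (pselect (act tau f q = act sig f q)) => // hq'.
  by have := hm q hq'; rewrite leNgt hq.
rewrite /=; rewrite ltNge; apply/negP => hle.
by apply: Dm; apply: key.
Qed.

End Cont.

Theorem proposition3p26 (S : Type) (s0 : S) :
  (exists s : qaut -> dcaut s0 (PV s0),
      section_hom s /\ cont_pointwise s) /\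
  (exists s : qaut -> dcaut s0 (PVbar s0),
      section_hom s /\ cont_metric s) /\
  (exists s : qaut -> dcaut s0 (PVhat s0), section_hom s) /\
  (exists s : qaut -> dcaut s0 (PVbb s0), section_hom s).
Proof.
split; first by exists (mk s0 (@PV_inv _ s0)); split; [exact: mk_section | exact: cont_PV].
split; first by exists (mk s0 (@PVbar_inv _ s0)); split; [exact: mk_section | exact: cont_PVbar].
split; first by exists (mk s0 (@PVhat_inv _ s0)); exact: mk_section.
by exists (mk s0 (@PVbb_inv _ s0)); exact: mk_section.
Qed.
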